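(* Let $n\ge2$, let $P$ be a partial $n$-Metric on a set $X$, let $x_o\in X$, and let $f:X\to X$ be non-expansive, i.e. $P(\langle f(x)\rangle^{n-1},f(y))\le P(\langle x\rangle^{n-1},y)$ for all $x,y\in X$. If $a$ is a special limit of the orbit $\{f^i(x_o)\}_{i\in\mathbb{N}}$, then $$P(\langle a\rangle^{n-1},f(a))=P(\langle a\rangle^n)\quad\text{and}\quad P(\langle f(a)\rangle^{n-1},a)\le P(\langle a\rangle^n).$$
   Context: Notation: $\langle a\rangle^k$ denotes the $k$-tuple $(a,\dots,a)$ inserted into an argument list; $f^0(x_o)=x_o$, $f^{i+1}(x_o)=f(f^i(x_o))$. A partial $n$-Metric on $X$ is a function $P:X^n\to\mathbb{R}$ such that for all $x_1,\dots,x_n,a\in X$: (1) $P(\langle x_1\rangle^n)\le P(\langle x_1\rangle^{n-1},x_2)$; (2) $P$ is invariant under permutations of its arguments; (3) $P(\langle x_1\rangle^{n-1},x_2)=P(\langle x_1\rangle^n)$ and $P(\langle x_2\rangle^{n-1},x_1)=P(\langle x_2\rangle^n)$ iff $x_1=x_2$; (4) $P(x_1,\dots,x_n)\le P(x_1,\dots,x_{n-1},a)+P(\langle a\rangle^{n-1},x_n)-P(\langle a\rangle^n)$. A sequence $\{x_i\}$ is Cauchy with central distance $r$ if for every $\epsilon>0$ there is $N$ with $|P(x_{i_1},\dots,x_{i_n})-r|<\epsilon$ for all $i_1,\dots,i_n>N$. A point $a$ is a limit of $\{x_i\}$ iff for every $\epsilon>0$ there is $N$ with $P(\langle a\rangle^{n-1},x_i)-P(\langle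 a\rangle^n)<\epsilon$ for all $i>N$. A special limit of a Cauchy sequence with central distance $r$ is a limit $a$ with $P(\langle a\rangle^n)=r$. *)

(* Defs.v *)
From Stdlib Require Import Reals.
From mathcomp Require Import all_boot perm.

Set Implicit Arguments.
Unset Strict Implicit.
Unset Printing Implicit Defensive.

Definition cst {X : Type} (n : nat) (x : X) : 'I_n -> X := fun _ => x.

Definition rep_last {X : Type} (n : nat) (x y : X) : 'I_n -> X :=
  fun i => if (nat_of_ord i == n.-1)%N then y else x.

Definition upd_last {X : Type} (n : nat) (x : 'I_n -> X) (a : X) : 'I_n -> X :=
  fun i => if (nat_of_ord i == n.-1)%N then a else x i.

Arguments cst {X} n x _.
Arguments rep_last {X} n x y _.
Arguments upd_last {X} {n} x a _.

Definition partial_nmetric {X : Type} (n : nat) (P : ('I_n -> X) -> R) : Prop :=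
  (forall x1 x2 : X, Rle (P (cst n x1)) (P (rep_last n x1 x2))) /\
  (forall (x : 'I_n -> X) (s : {perm 'I_n}), P (fun i => x (s i)) = P x) /\
  (forall x1 x2 : X,
      (P (rep_last n x1 x2) = P (cst n x1) /\ P (rep_last n x2 x1) = P (cst n x2))
      <-> x1 = x2) /\
  (forall (x : 'I_n -> X) (a : X) (k : 'I_n), nat_of_ord k = n.-1 ->
      Rle (P x) (Rminus (Rplus (P (upd_last x a)) (P (rep_last n a (x k)))) (P (cst n a)))).

Definition cauchy_central {X : Type} (n : nat) (P : ('I_n -> X) -> R)
  (s : nat -> X) (r : R) : Prop :=
  forall eps : R, Rlt 0 eps -> exists N : nat,
    forall idx : 'I_n -> nat, (forall k, (N < idx k)%N) ->
      Rlt (Rabs (Rminus (P (fun k => s (idx k))) r)) eps.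

Definition is_limit {X : Type} (n : nat) (P : ('I_n -> X) -> R)
  (s : nat -> X) (a : X) : Prop :=
  forall eps : R, Rlt 0 eps -> exists N : nat,
    forall i : nat, (N < i)%N ->
      Rlt (Rminus (P (rep_last n a (s i))) (P (cst n a))) eps.

Definition special_limit {X : Type} (n : nat) (P : ('I_n -> X) -> R)
  (s : nat -> X) (a : X) : Prop :=
  exists r : R, cauchy_central P s r /\ is_limit P s a /\ P (cst n a) = r.

(* Main.v *)
Require Import Defs.
From Stdlib Require Import Reals.
From mathcomp Require Import all_boot perm.
From Stdlib Require Import Lra Lia FunctionalExtensionality.
From mathcomp Require Import zify.

Open Scope R_scope.

Lemma chain (X : Type) (n : nat) (P : ('I_n -> X) -> R) (Hn : (0 < n)%N)
  (HP : partial_nmetric P) (a s : X) (m : nat) : (m <= n)%N ->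
  P (fun i : 'I_n => if (i < m)%N then s else a) <=
  P (cst n a) + INR m * (P (rep_last n a s) - P (cst n a)).
Proof.
  destruct HP as [H1 [H2 [H3 H4]]].
  elim: m => [|m IH] Hm.
  - have -> : (fun i : 'I_n => if (i < 0)%N then s else a) = cst n a.
      by apply functional_extensionality => i; rewrite ltn0.
    simpl; lra.
  - have Hm' : (m < n)%N by [].
    have Hl : (n.-1 < n)%N by lia.
    pose k := Ordinal Hm'. pose l := Ordinal Hl.
    pose sg := tperm k l.
    set t1 := (fun i : 'I_n => if (i < m.+1)%N then s else a).
    set t0 := (fun i : 'I_n => if (i < m)%N then s else a).
    have E1 : P t1 = P (fun i => t1 (sg i)) by rewrite H2.
    have E0 : P t0 = P (fun i => t0 (sg i)) by rewrite H2.
    have H := H4 (fun i => t1 (sg i)) a l erefl.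
    have Hy : t1 (sg l) = s.
      by rewrite /sg tpermR /t1 /= ltnSn.
    have Hu : upd_last (fun i => t1 (sg i)) a = (fun i => t0 (sg i)).
      apply functional_extensionality => i.
      rewrite /upd_last /t1 /t0 /sg.
      case: tpermP => [->|->|ik il] /=.
      + case: (m =P n.-1) => [e|ne].
        * by rewrite e ltnn.
        * have -> : (n.-1 < m.+1)%N = false by lia.
          have -> : (n.-1 < m)%N = false by lia. done.
      + by rewrite eqxx ltnn.
      + have ne1 : (nat_of_ord i != n.-1) by apply/eqP => e; apply: il; apply: val_inj.
        have ne : (nat_of_ord i != m) by apply/eqP => e; apply: ik; apply: val_inj.
        rewrite (negbTE ne1) ltnS leq_eqVlt (negbTE ne) //.
    rewrite Hy Hu -E0 -E1 in H.
    have IH' := IH (ltnW Hm).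
    rewrite S_INR. fold t0 in IH'. lra.
Qed.
Lemma le_eps (x r c : R) : 0 < c -> (forall e, 0 < e -> x <= r + c * e) -> x <= r.
Proof.
  move=> Hc H. destruct (Rle_dec x r) as [h|h]; first done.
  have Hd : 0 < (x - r) / (2 * c).
    apply Rdiv_lt_0_compat; lra.
  have := H _ Hd.
  have -> : c * ((x - r) / (2 * c)) = (x - r) / 2 by field; lra.
  lra.
Qed.

Lemma upd_rep (X : Type) (n : nat) (a b c : X) : upd_last (rep_last n a b) c = rep_last n a c.
Proof.
  apply functional_extensionality => i. rewrite /upd_last /rep_last. by case: (_ == _).
Qed.

Lemma rep_t (X : Type) (n : nat) (y a : X) :
  rep_last n y a = (fun i : 'I_n => if (i < n.-1)%N then y else a).
Proof.
  apply functional_extensionality => i. rewrite /rep_last.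
  have := ltn_ord i. case: eqP => [e|ne] Hi.
  - by rewrite e ltnn.
  - have -> : (i < n.-1)%N by lia. done.
Qed.

Theorem lemma6p7 (X : Type) (n : nat) (P : ('I_n -> X) -> R)
  (x0 : X) (f : X -> X) (a : X) :
  (2 <= n)%N ->
  partial_nmetric P ->
  (forall x y : X, Rle (P (rep_last n (f x) (f y))) (P (rep_last n x y))) ->
  special_limit P (fun i => iter i f x0) a ->
  P (rep_last n a (f a)) = P (cst n a) /\
  Rle (P (rep_last n (f a) a)) (P (cst n a)).
Proof.
  move=> Hn HP Hf [r [Hc [Hl Hr]]].
  have HP' := HP. destruct HP' as [H1 [H2 [H3 H4]]].
  have Hn0 : (0 < n)%N by lia.
  have Hl0 : (n.-1 < n)%N by lia.
  pose l := Ordinal Hl0.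
  set c := INR n.-1.
  have Hc0 : 0 <= c by apply pos_INR.
  have Ch : forall y, P (rep_last n y a) <= r + c * (P (rep_last n a y) - r).
    move=> y. rewrite rep_t -Hr. apply: chain => //. lia.
  have Key : forall e, 0 < e -> exists y, P (rep_last n a (f y)) - r < e /\
      P (rep_last n a y) - r < e /\ r - P (cst n (f y)) < e.
    move=> e he.
    have [N1 HN1] := Hc e he. have [N2 HN2] := Hl e he.
    exists (iter (N1 + N2).+1 f x0).
    have A := HN1 (fun _ => (N1 + N2).+2) ltac:(move=> k; lia).
    have B1 := HN2 (N1 + N2).+2 ltac:(lia).
    have B2 := HN2 (N1 + N2).+1 ltac:(lia).
    rewrite Hr in B1 B2. simpl in A, B1, B2.
    have := Rabs_def2 _ _ A. move=> [A1 A2].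
    split; [exact B1 | split; [exact B2 | ]].
    rewrite /cst /=; lra.
  split.
  - apply Rle_antisym; last by apply H1.
    rewrite Hr. apply: (le_eps _ _ (c + 2)); first lra.
    move=> e he. have [y [Hy1 [Hy2 Hy3]]] := Key e he.
    have H := H4 (rep_last n a (f a)) (f y) l erefl.
    rewrite upd_rep in H.
    have El : rep_last n a (f a) l = f a by rewrite /rep_last /= eqxx.
    rewrite El in H.
    have Hfy := Hf y a. have Cy := Ch y.
    have Hd : 0 <= P (rep_last n a y) - r by rewrite -Hr; have := H1 a y; lra.
    have : c * (P (rep_last n a y) - r) <= c * e by apply Rmult_le_compat_l; lra.
    lra.
  - rewrite Hr. apply: (le_eps _ _ (c + 2)); first lra.
    move=> e he. have [y [Hy1 [Hy2 Hy3]]] := Key e he.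
    have H := H4 (rep_last n (f a) a) (f y) l erefl.
    rewrite upd_rep in H.
    have El : rep_last n (f a) a l = a by rewrite /rep_last /= eqxx.
    rewrite El in H.
    have Hfy := Hf a y. have Cy := Ch (f y).
    have Hd : 0 <= P (rep_last n a (f y)) - r by rewrite -Hr; have := H1 a (f y); lra.
    have : c * (P (rep_last n a (f y)) - r) <= c * e by apply Rmult_le_compat_l; lra.
    lra.
Qed.
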